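(* There exists a sequence $S\in\{0,1\}^\omega$ such that for all $0<\alpha<1$, FS-depth$(S)\ge 1-\alpha$ and PD-depth$(S)<\alpha$.
   Context: $S\upharpoonright n$ is the length-$n$ prefix of $S$. A finite-state transducer (FST) is $T=(Q,q_0,\delta,\nu)$ with finite state set $Q$, start state $q_0$, $\delta:Q\times\{0,1\}\to Q$, $\nu:Q\times\{0,1\}\to\{0,1\}^*$; $T(\lambda)=\lambda$, $T(xb)=T(x)\nu(\hat\delta(x),b)$. FSTs are described by the following fixed binary representation $\sigma$. For $n\ge1$, $\mathrm{bin}(n)$ is the binary representation of $n$ and $\mathrm{string}(n)$ is $\mathrm{bin}(n)$ with its leading 1 removed. For $x=x_1\cdots x_l$, $x^\dagger=x_10x_20\cdots x_{l-1}0x_l1$, $x^\diamond=\overline{(1x)^\dagger}$ (bitwise complement), and $d(x)=x_1x_1\cdots x_lx_l$. For an FST with states $q_1,\dots,q_m$, write for $1\le i\le m$, $b\in\{0,1\}$, $t=2i-1+b$: $(\delta(q_i,b),\nu(q_i,b))=(q_{1+(n_t \bmod m)},\mathrm{string}(n'_t))$; its transition table is encoded as $\pi=\mathrm{bin}(n_1)^\ddagger\mathrm{string}(n'_1)^\diamond\cdots\mathrm{bin}(n_{2m})^\ddagger\mathrm{string}(n'_{2m})^\diamond$, where $\mathrm{bin}(n_t)^\ddagger$ is empty if the corresponding transition is a self-loop and $\mathrm{bin}(n_t)^\dagger$ otherwise. The string $d(\mathrm{bin}(i))01\pi$ describes that FST with start state $q_i$. $|T|$ is the length of the shortest description of $T$,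 $\mathrm{FST}^{\le k}=\{T:|T|\le k\}$, and $D^k(x)=\min\{|y|: T\in\mathrm{FST}^{\le k},\,T(y)=x\}$ ($\infty$ if no such $y$). FS-depth$(S)\ge\alpha$ means: for every $k\in\mathbb{N}$ there is $k'\in\mathbb{N}$ such that $D^k(S\upharpoonright n)-D^{k'}(S\upharpoonright n)\ge\alpha n$ for infinitely many $n$. A pushdown compressor (PDC) is $C=(Q,\Gamma,\delta,\nu,q_0,z_0,c)$ with finite state set, stack alphabet $\Gamma=\{0,1,z_0\}$ ($z_0$ bottom-of-stack, never removed), partial transition function $\delta: Q\times(\{0,1\}\cup\{\lambda\})\times\Gamma\to Q\times\Gamma^*$ (top stack symbol replaced by the given string), output function $\nu$ on the same domain into $\{0,1\}^*$, and $c$ bounding consecutive $\lambda$-transitions (reading no input, popping top symbol, outputting nothing); for each $q,a$ either $\delta(q,\lambda,a)$ or both $\delta(q,b,a)$ are undefined. $C(w)$ is the output on $w$ and $\delta_Q(w)$ the final state; $C$ is an ILPDC if $w\mapsto(C(w),\delta_Q(w))$ is injective. ILUPDCs are the same with stack alphabet $\{0,z_0\}$. PD-depth$(S)\ge\alpha$ means: for every ILUPDC $C$ there is an ILPDC $C'$ with $|C(S\upharpoonright n)|-|C'(S\upharpoonright n)|\ge\alpha n$ for all but finitely many $n$; PD-depth$(S)<\alpha$ means this fails. *)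

(* Defs.v *)
From HB Require Import structures.
From mathcomp Require Import all_boot all_order all_algebra.
From mathcomp Require Import all_classical all_reals ereal.
From mathcomp Require Import Rstruct.

Set Implicit Arguments.
Unset Strict Implicit.
Unset Printing Implicit Defensive.

Import Order.TTheory GRing.Theory Num.Theory.

(* Binary strings are [seq bool] (false = 0, true = 1); infinite       *)
(* sequences are [nat -> bool].                                        *)

Definition prefix (S : nat -> bool) (n : nat) : seq bool := mkseq S n.

(* little-endian bits of n (the fuel n is always enough) *)
Fixpoint lebits (fuel n : nat) : seq bool :=
  match fuel with
  | 0 => [::]
  | fuel'.+1 => if n == 0 then [::] else odd n :: lebits fuel' n./2
  end.

Definition bin (n : nat) : seq bool := rev (lebits n n).

Definition string_of (n : nat) : seq bool := behead (bin n).

Fixpoint dagger (x : seq bool) : seq bool :=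
  match x with
  | [::] => [::]
  | a :: x' => if x' is [::] then [:: a; true] else a :: false :: dagger x'
  end.

Definition diamond (x : seq bool) : seq bool := map negb (dagger (true :: x)).

Definition dbl (x : seq bool) : seq bool := flatten (map (fun b => [:: b; b]) x).

(* An FST with m = fm.+1 states q_1,...,q_m, represented by the ordinals
   0,...,m-1 (state q_i is the ordinal i-1). *)
Record fst := FST {
  fm : nat;
  fstart : 'I_fm.+1;
  fdelta : 'I_fm.+1 -> bool -> 'I_fm.+1;
  fnu : 'I_fm.+1 -> bool -> seq bool
}.

Fixpoint fst_run_from (m : nat) (d : 'I_m -> bool -> 'I_m)
    (nu : 'I_m -> bool -> seq bool) (q : 'I_m) (y : seq bool) : seq bool :=
  match y with
  | [::] => [::]
  | b :: y' => nu q b ++ fst_run_from d nu (d q b) y'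
  end.

Definition fst_run (T : fst) (y : seq bool) : seq bool :=
  fst_run_from (@fdelta T) (@fnu T) (fstart T) y.

(* [describes p T] : the string p is a description of T under sigma:
   p = d(bin(i)) 01 pi, with i the (1-based) start state and
   pi = bin(n_1)^ddagger string(n'_1)^diamond ... bin(n_2m)^ddagger string(n'_2m)^diamond,
   where, for t = 2i-1+b, delta(q_i,b) = q_{1+(n_t mod m)} and
   nu(q_i,b) = string(n'_t). *)
Definition describes (p : seq bool) (T : fst) : Prop :=
  exists ns : 'I_(fm T).+1 -> bool -> nat,
    (forall j b, 0 < ns j b /\ ns j b %% (fm T).+1 = @fdelta T j b) /\
    let code j b :=
      (if @fdelta T j b == j then [::] else dagger (bin (ns j b)))
        ++ diamond (@fnu T j b) in
    p = dbl (bin (fstart T).+1) ++ [:: false; true]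
          ++ flatten [seq code j false ++ code j true | j <- enum 'I_(fm T).+1].

Definition fst_le (k : nat) (T : fst) : Prop :=
  exists p, describes p T /\ size p <= k.

Definition Dk (k : nat) (x : seq bool) : \bar Rdefinitions.R :=
  ereal_inf [set ((size y)%:R)%:E
            | y in [set y | exists T, fst_le k T /\ fst_run T y = x]].

(* FS-depth(S) >= a : for every k there is k' with
   D^k(S|n) - D^{k'}(S|n) >= a n for infinitely many n
   (the inequality is read as D^k >= D^{k'} + a n in the extended reals). *)
Definition FS_depth_ge (S : nat -> bool) (a : Rdefinitions.R) : Prop :=
  forall k : nat, exists k' : nat, forall N : nat, exists2 n : nat, N <= n &
    (Dk k' (prefix S n) + (a * n%:R)%:E <= Dk k (prefix S n))%E.

(* A PDC whose stack alphabet is [option G]: [None] is the bottom symbol z0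
   and [Some g] the other symbols.  G = bool gives {0,1,z0} (ILPDC),
   G = unit gives {0,z0} (ILUPDC).  Input [None] stands for lambda. *)
Record pdc (G : Type) := PDC {
  pQ : finType;
  pq0 : pQ;
  pdelta : pQ -> option bool -> option G -> option (pQ * seq (option G));
  pnu : pQ -> option bool -> option G -> seq bool;
  pc : nat
}.

Section PDCSem.
Variables (G : Type) (C : pdc G).

(* one lambda transition from configuration (q, stack) (top = head) *)
Definition lam_step (cfg : pQ C * seq (option G)) :
    option (pQ C * seq (option G)) :=
  match cfg.2 with
  | [::] => None
  | a :: st => match @pdelta _ C cfg.1 None a with
               | Some (q', g) => Some (q', g ++ st)
               | None => None
               end
  end.

Fixpoint lam_chain (n : nat) (cfg : pQ C * seq (option G)) :
    option (pQ C * seq (option G)) :=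
  match n with
  | 0 => Some cfg
  | n'.+1 => match lam_step cfg with
             | Some cfg' => lam_chain n' cfg'
             | None => None
             end
  end.

Fixpoint close (n : nat) (q : pQ C) (st : seq (option G)) :
    pQ C * seq (option G) * seq bool :=
  match n with
  | 0 => (q, st, [::])
  | n'.+1 =>
    match st with
    | [::] => (q, st, [::])
    | a :: st' =>
      match @pdelta _ C q None a with
      | Some (q', g) =>
          let '(q2, st2, o2) := close n' q' (g ++ st') in
          (q2, st2, @pnu _ C q None a ++ o2)
      | None => (q, st, [::])
      end
    end
  end.

Fixpoint pdc_run_from (q : pQ C) (st : seq (option G)) (w : seq bool) :
    option (seq bool * pQ C) :=
  match w with
  | [::] => Some ([::], q)
  | b :: w' =>
    match st with
    | [::] => None
    | a :: st' =>
      match @pdelta _ C q (Some b) a with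
      | None => None
      | Some (q1, g) =>
        let '(q2, st2, o2) := close (pc C) q1 (g ++ st') in
        match pdc_run_from q2 st2 w' with
        | None => None
        | Some (o, qf) => Some (@pnu _ C q (Some b) a ++ o2 ++ o, qf)
        end
      end
    end
  end.

Definition pdc_run (w : seq bool) : option (seq bool * pQ C) :=
  pdc_run_from (pq0 C) [:: None] w.

(* |C(w)| (the [None] case never occurs for an ILPDC, which is total) *)
Definition pdc_outlen (w : seq bool) : nat :=
  if pdc_run w is Some (o, _) then size o else 0.

Definition pdc_valid : Prop :=
  (* determinism: a lambda transition excludes both input transitions *)
  (forall q a, @pdelta _ C q None a <> None ->
      @pdelta _ C q (Some false) a = None /\ @pdelta _ C q (Some true) a = None) /\
  (forall q a q' g, @pdelta _ C q None a = Some (q', g) ->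
      g = [::] /\ @pnu _ C q None a = [::]) /\
  (* the bottom symbol z0 is never removed *)
  (forall q b q' g, @pdelta _ C q b None = Some (q', g) ->
      exists g', g = rcons g' None) /\
  (* c bounds the number of consecutive lambda transitions *)
  (forall q st, lam_chain (pc C).+1 (q, st) = None).

Definition pdc_IL : Prop := pdc_valid /\ injective pdc_run.

End PDCSem.

Definition ILPDC (C : pdc bool) : Prop := pdc_IL C.
Definition ILUPDC (C : pdc unit) : Prop := pdc_IL C.

Definition PD_depth_ge (S : nat -> bool) (a : Rdefinitions.R) : Prop :=
  forall C : pdc unit, ILUPDC C ->
    exists2 C' : pdc bool, ILPDC C' &
      exists N : nat, forall n : nat, N <= n ->
        ((pdc_outlen C (prefix S n))%:R - (pdc_outlen C' (prefix S n))%:R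
           >= a * n%:R)%R.

(* Main.v *)
Require Import Defs.
From HB Require Import structures.
From mathcomp Require Import all_boot all_order all_algebra.
From mathcomp Require Import all_classical all_reals ereal.
From mathcomp Require Import Rstruct.
From mathcomp Require Import lra zify.

Set Implicit Arguments.
Unset Strict Implicit.
Unset Printing Implicit Defensive.


Definition pre (A Z : seq bool) := exists s, Z = A ++ s.

Lemma pre_cat_l A B Z : pre (A ++ B) Z -> pre A Z.
Proof. by case=> s ->; exists (B ++ s); rewrite catA. Qed.

Lemma pre_ext A Z W : pre A Z -> pre A (Z ++ W).
Proof. by case=> s ->; exists (s ++ W); rewrite catA. Qed.

Lemma drop_cat_le (n : nat) (s1 s2 : seq bool) : n <= size s1 ->
  drop n (s1 ++ s2) = drop n s1 ++ s2.
Proof.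
move=> h; rewrite drop_cat; case: ltngtP h => // eq _.
by rewrite eq subnn drop0 drop_size.
Qed.

Lemma take_cat_le (n : nat) (s1 s2 : seq bool) : n <= size s1 ->
  take n (s1 ++ s2) = take n s1.
Proof.
move=> h; rewrite take_cat; case: ltngtP h => // eq _.
by rewrite eq subnn take0 cats0 take_size.
Qed.

Lemma pre_drop A u Z : pre A (u ++ Z) -> pre (drop (size u) A) Z.
Proof.
case=> s E.
have [le|lt] := leqP (size u) (size A).
- have : drop (size u) (u ++ Z) = drop (size u) (A ++ s) by rewrite E.
  by rewrite drop_size_cat // drop_cat_le // => ->; exists s.
- rewrite drop_oversize ?(ltnW lt) //; by exists Z.
Qed.

Section Run.
Variables (m : nat) (d : 'I_m -> bool -> 'I_m) (nu : 'I_m -> bool -> seq bool).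

Definition after (q : 'I_m) (y : seq bool) := foldl d q y.

Lemma run_cat q y1 y2 :
  fst_run_from d nu q (y1 ++ y2) =
  fst_run_from d nu q y1 ++ fst_run_from d nu (after q y1) y2.
Proof. by elim: y1 q => //= b y IH q; rewrite IH catA. Qed.

Variable L : nat.
Hypothesis nuL : forall q b, size (nu q b) <= L.

Lemma splitG X q y : pre X (fst_run_from d nu q y) ->
  exists y1 y2 u, [/\ y = y1 ++ y2, fst_run_from d nu q y1 = X ++ u & size u <= L].
Proof.
elim: y q X => [|b y IH] q X /=.
  case=> s /esym; case: X => // _.
  by exists [::], [::], [::].
case=> s E.
have [le|lt] := leqP (size X) (size (nu q b)).
- exists [:: b], y, (drop (size X) (nu q b)); split => //=.
  + rewrite cats0.
    have : take (size X) (nu q b ++ fst_run_from d nu (d q b) y) = take (size X) (X ++ s)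
      by rewrite E.
    rewrite (@take_size_cat _ _ X) // take_cat_le // => EX.
    by rewrite -{1}(cat_take_drop (size X) (nu q b)) EX.
  + by rewrite size_drop; apply: leq_trans (leq_subr _ _) (nuL _ _).
- have H : pre (drop (size (nu q b)) X) (fst_run_from d nu (d q b) y).
    apply: pre_drop; by exists s.
  have [y1 [y2 [u [Ey E1 Hu]]]] := IH _ _ H.
  exists (b :: y1), y2, u; split => //=; first by rewrite Ey.
  rewrite E1 catA; congr (_ ++ _).
  have : take (size (nu q b)) (nu q b ++ fst_run_from d nu (d q b) y) =
         take (size (nu q b)) (X ++ s) by rewrite E.
  rewrite (@take_size_cat _ _ (nu q b)) // take_cat_le ?(ltnW lt) // => EX.
  by rewrite {1}EX cat_take_drop.
Qed.

Variables (R : seq bool) (t : nat).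
Hypothesis LR : L < size R.
Hypothesis Inc : forall q v dd, dd <= L -> size v <= t ->
  ~ pre (drop dd R) (fst_run_from d nu q v).

Lemma LB mm : forall q y dd, dd <= L ->
  pre (drop dd (flatten (nseq mm R))) (fst_run_from d nu q y) ->
  mm * t.+1 <= size y.
Proof.
elim: mm => [|mm IH] q y dd hd //=.
have hdR : dd <= size R by apply: leq_trans hd (ltnW LR).
rewrite drop_cat_le // => P.
have P1 := pre_cat_l P.
have [y1 [y2 [u [Ey E1 Hu]]]] := splitG P1.
have Hy1 : t < size y1.
  rewrite ltnNge; apply/negP => hle; apply: (@Inc q y1 dd hd hle).
  by rewrite E1; exists u.
move: P; rewrite Ey run_cat E1 -catA.
case=> s; rewrite -catA => /(f_equal (drop (size (drop dd R)))).
rewrite !drop_size_cat // => E2.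
have P2 : pre (flatten (nseq mm R)) (u ++ fst_run_from d nu (after q y1) y2)
  by exists s; rewrite E2.
have := IH _ _ _ Hu (pre_drop P2).
move=> h; rewrite size_cat mulSn; lia.
Qed.

End Run.


Lemma size_dagger x : size (dagger x) = 2 * size x.
Proof.
elim: x => //= a x IH; case: x IH => //= b x IH.
by rewrite IH /=; lia.
Qed.

Lemma size_diamond x : size (diamond x) = 2 * (size x).+1.
Proof. by rewrite /diamond size_map size_dagger. Qed.

Lemma size_flatten_mem (x : seq bool) (s : seq (seq bool)) :
  x \in s -> size x <= size (flatten s).
Proof.
elim: s => //= a s IH; rewrite in_cons size_cat => /orP[/eqP->|/IH h].
  exact: leq_addr.
by apply: leq_trans h (leq_addl _ _).
Qed.

Lemma size_flatten_ge (s : seq (seq bool)) :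
  all (fun x => 0 < size x) s -> size s <= size (flatten s).
Proof.
elim: s => //= a s IH /andP[ha hs]; rewrite size_cat.
have := IH hs; lia.
Qed.

Lemma describes_bounds p T : describes p T ->
  fm T < size p /\ forall j b, size (@fnu T j b) < size p.
Proof.
case=> ns [_ /= ->].
set F := (fun j : 'I_(fm T).+1 => _ ++ _).
have hF : forall j b, size (@fnu T j b) < size (F j).
  move=> j b; rewrite /F !size_cat !size_diamond; case: b; lia.
have hin : forall j, F j \in map F (enum 'I_(fm T).+1).
  by move=> j; apply: map_f; rewrite mem_enum.
split.
- rewrite !size_cat.
  have : size (map F (enum 'I_(fm T).+1)) <= size (flatten (map F (enum 'I_(fm T).+1))).
    apply: size_flatten_ge; apply/allP => x /mapP[j _ ->].
    by apply: leq_ltn_trans (hF j true).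
  rewrite size_map size_enum_ord /=; lia.
- move=> j b; rewrite !size_cat.
  have := size_flatten_mem (hin j); have := hF j b; rewrite /=; lia.
Qed.

Definition Tab (i : nat) := {ffun 'I_i.+1 * bool -> 'I_i.+1 * ('I_i.+1 * i.-tuple bool)}.

Definition runTab i (tau : Tab i) (q : 'I_i.+1) (v : seq bool) : seq bool :=
  fst_run_from (fun q b => (tau (q, b)).1) (fun q b => take (tau (q, b)).2.1 (tau (q, b)).2.2) q v.

Definition tabOf i (T : fst) : Tab i :=
  [ffun qb : 'I_i.+1 * bool => let q0 := (inord qb.1 : 'I_(fm T).+1) in
     (inord (@fdelta T q0 qb.2),
      (inord (size (@fnu T q0 qb.2)), [tuple nth false (@fnu T q0 qb.2) x | x < i]))].

Lemma tabOfP i (T : fst) : fm T <= i -> (forall j b, size (@fnu T j b) <= i) ->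
  forall (q0 : 'I_(fm T).+1) v,
  fst_run_from (@fdelta T) (@fnu T) q0 v = runTab (tabOf i T) (inord q0) v.
Proof.
move=> hfm hnu q0 v; elim: v q0 => //= b v IH q0.
rewrite /runTab /= ffunE /=.
have -> : (inord (inord q0 : 'I_i.+1) : 'I_(fm T).+1) = q0.
  apply: val_inj; have hq := ltn_ord q0; rewrite /= !inordK //; lia.
rewrite IH; congr (_ ++ _).
rewrite inordK; last by have := hnu q0 b; lia.
have -> : [seq nth false (@fnu T q0 b) (val x) | x <- enum 'I_i] =
          map (nth false (@fnu T q0 b)) (iota 0 i).
  by rewrite -val_enum_ord -map_comp.
have hn := hnu q0 b.
apply: (@eq_from_nth _ false); first by rewrite size_takel // size_map size_iota.
move=> x hx; rewrite nth_take // (nth_map 0) ?size_iota ?nth_iota //; lia.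
Qed.


Section Count.
Variable i : nat.
Definition idx0 := (Tab i * 'I_i.+1 * 'I_i.+1 * i.-tuple bool)%type.
Definition Kc := #|{: idx0}|.+1.
Definition rr := i.+1 * Kc.
Definition tt := i * Kc.

Definition fcode (x : idx0 * tt.-tuple bool) : rr.-tuple bool :=
  let '(tau, q, dd, w, v) := x in
  [tuple nth false (take dd w ++ take (rr - dd) (runTab tau q v)) k | k < rr].

Lemma exR : exists R : rr.-tuple bool, forall x, fcode x != R.
Proof.
have : ~~ [forall R : rr.-tuple bool, [exists x, fcode x == R]].
  apply/negP => /forallP H.
  have : #|{: rr.-tuple bool}| <= #|{: idx0 * tt.-tuple bool}|.
    rewrite -(size_codom fcode); apply: leq_trans (card_size _).
    apply: subset_leq_card; apply/fintype.subsetP => R _.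
    by have /existsP[x /eqP <-] := H R; apply: codom_f.
  rewrite card_prod !card_tuple card_bool /rr mulSn expnD ltn_geF //.
  rewrite ltn_pmul2r ?expn_gt0 // /Kc.
  apply: leq_trans (ltn_expl _ (isT : 1 < 2)); rewrite ltnS; exact: leqnSn.
by move/forallPn => [R /existsPn H]; exists R.
Qed.

Lemma IncTab (R : rr.-tuple bool) : (forall x, fcode x != R) ->
  forall (tau : Tab i) q (v : tt.-tuple bool) dd, dd <= i -> ~ pre (drop dd R) (runTab tau q v).
Proof.
move=> HR tau q v dd hd [s E].
have hri : i < rr by rewrite /rr /Kc mulSn; lia.
pose w := [tuple nth false (take dd R) k | k < i].
apply: (negP (HR ((tau, q, inord dd, w), v))); apply/eqP.
apply: eq_from_tnth => k; rewrite tnth_mktuple (tnth_nth false).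
congr nth; rewrite inordK; last lia.
have -> : take dd w = take dd R.
  have -> : val w = map (nth false (take dd R)) (iota 0 i).
    by rewrite /= -val_enum_ord -map_comp.
  apply: (@eq_from_nth _ false).
    rewrite size_takel ?size_map ?size_iota // size_takel // size_tuple; lia.
  move=> x; rewrite size_takel ?size_map ?size_iota // => hx.
  rewrite nth_take // (nth_map 0) ?size_iota ?nth_iota //; lia.
rewrite E take_size_cat; first by rewrite cat_take_drop.
by rewrite size_drop size_tuple.
Qed.

End Count.

Definition Rsel (i : nat) : seq bool := val (proj1_sig (cid (exR i))).

Lemma size_Rsel i : size (Rsel i) = rr i.
Proof. by rewrite /Rsel size_tuple. Qed.

Lemma IncT i (T : fst) : fst_le i T ->
  forall (q : 'I_(fm T).+1) v dd, dd <= i -> size v <= tt i ->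
  ~ pre (drop dd (Rsel i)) (fst_run_from (@fdelta T) (@fnu T) q v).
Proof.
case=> p [hp hsz] q v dd hd hv Hpre.
have [hfm hnu] := describes_bounds hp.
have hfm' : fm T <= i by lia.
have hnu' : forall j b, size (@fnu T j b) <= i by move=> j b; have := hnu j b; lia.
set v' := v ++ nseq (tt i - size v) false.
have hv' : size v' == tt i by rewrite size_cat size_nseq; apply/eqP; lia.
have := @IncTab i (sval (cid (exR i))) (svalP (cid (exR i))) (tabOf i T) (inord q) (Tuple hv') dd hd.
apply; rewrite /= -tabOfP // /v' run_cat.
exact: pre_ext.
Qed.


Definition cdesc (T : fst) : seq bool :=
  let ns := fun j b => (@fdelta T j b : nat) + (fm T).+1 in
  let code j b := (if @fdelta T j b == j then [::] else dagger (bin (ns j b)))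
        ++ diamond (@fnu T j b) in
  dbl (bin (fstart T).+1) ++ [:: false; true]
      ++ flatten [seq code j false ++ code j true | j <- enum 'I_(fm T).+1].

Lemma cdescP T : describes (cdesc T) T.
Proof.
exists (fun j b => (@fdelta T j b : nat) + (fm T).+1); split => //.
move=> j b; split; first by rewrite addnS.
by rewrite modnDr modn_small.
Qed.

Definition enc (P : seq bool) := flatten [seq [:: false; b] | b <- P].

Lemma size_enc P : size (enc P) = 2 * size P.
Proof. by elim: P => //= b P IH; rewrite IH; lia. Qed.

Lemma size_fnseq m (R : seq bool) : size (flatten (nseq m R)) = m * size R.
Proof. by elim: m => //= m IH; rewrite size_cat IH mulSn. Qed.

Definition Tb (R : seq bool) : fst :=
  @FST 1 ord0 (fun q b => if (q == ord0) && ~~ b then ord_max else ord0)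
    (fun q b => if q == ord0 then (if b then R else [::]) else [:: b]).

Lemma Tb_run R P m : fst_run (Tb R) (enc P ++ nseq m true) = P ++ flatten (nseq m R).
Proof.
rewrite /fst_run /=; elim: P => [|b P IH] /=.
  by elim: m => //= m ->.
by rewrite IH.
Qed.

Lemma Dk_ub k x y T : fst_le k T -> fst_run T y = x ->
  (Dk k x <= ((size y)%:R)%:E)%E.
Proof.
move=> hT hr; apply: ereal_inf_le; exists ((size y)%:R)%:E => //.
by exists y => //; exists T.
Qed.

Lemma Dk_lb k x (M : nat) :
  (forall T y, fst_le k T -> fst_run T y = x -> M <= size y) ->
  (((M%:R)%:E : \bar Rdefinitions.R) <= Dk k x)%E.
Proof.
move=> H; apply: le_ereal_inf_tmp => _ [y [T [hT hr]] <-].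
by rewrite lee_fin Num.Theory.ler_nat; exact: H hr.
Qed.

Lemma LBfst k i T y P m : k <= i -> fst_le k T ->
  fst_run T y = P ++ flatten (nseq m (Rsel i)) -> m * (tt i).+1 <= size y.
Proof.
move=> hki hT hr.
have hTi : fst_le i T by case: hT => p [hp hs]; exists p; split => //; lia.
have [hfm hnu] : fm T < i.+1 /\ forall j b, size (@fnu T j b) <= i.
  case: hTi => p [hp hs]; have [h1 h2] := describes_bounds hp.
  by split; [lia | move=> j b; have := h2 j b; lia].
have hLR : i < size (Rsel i) by rewrite size_Rsel /rr /Kc mulSn; lia.
have hpre : pre P (fst_run T y) by rewrite hr; exists (flatten (nseq m (Rsel i))).
have [y1 [y2 [u [Ey E1 Hu]]]] := splitG hnu hpre.
move: hr; rewrite /fst_run Ey run_cat E1 -catA => /(f_equal (drop (size P))).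
rewrite !drop_size_cat // => E2.
have hp2 : pre (flatten (nseq m (Rsel i))) (u ++ fst_run_from (@fdelta T) (@fnu T)
   (after (@fdelta T) (fstart T) y1) y2) by exists [::]; rewrite cats0 E2.
have := LB hnu hLR (IncT hTi) Hu (pre_drop hp2).
rewrite size_cat; lia.
Qed.


Definition lev (j : nat) := logn 2 j.

Fixpoint W (j : nat) : seq bool :=
  match j with
  | 0 => [::]
  | j'.+1 =>
    let Q := W j' ++ flatten (nseq (3 * size (W j')).+1 (Rsel (lev j'))) in
    Q ++ nseq (j' * (size Q).+1) false
  end.

Definition Qs j := W j ++ flatten (nseq (3 * size (W j)).+1 (Rsel (lev j))).

Lemma WS j : W j.+1 = Qs j ++ nseq (j * (size (Qs j)).+1) false.
Proof. by []. Qed.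

Lemma size_Qs j : (size (W j)).+1 <= size (Qs j).
Proof.
rewrite /Qs size_cat size_fnseq size_Rsel /rr /Kc; nia.
Qed.

Lemma size_W j : j <= size (W j).
Proof.
elim: j => //= j IH; rewrite -/(Qs j) size_cat.
have := size_Qs j; lia.
Qed.

Lemma W_pre j j' : j <= j' -> exists s, W j' = W j ++ s.
Proof.
elim: j' => [|j' IH]; first by rewrite leqn0 => /eqP ->; exists [::].
rewrite leq_eqVlt => /orP[/eqP ->|]; first by exists [::]; rewrite cats0.
rewrite ltnS => /IH [s E]; rewrite WS /Qs E -!catA; by eexists.
Qed.

Definition S (n : nat) : bool := nth false (W n.+1) n.

Lemma nth_pre (A s : seq bool) x : x < size A -> nth false (A ++ s) x = nth false A x.
Proof. by move=> h; rewrite nth_cat h. Qed.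

Lemma prefixS j n : n <= size (W j) -> Defs.prefix S n = take n (W j).
Proof.
move=> hn; apply: (@eq_from_nth _ false).
  by rewrite size_mkseq size_takel.
move=> x; rewrite size_mkseq => hx.
rewrite nth_mkseq // nth_take // /S.
have [s1 E1] := W_pre (leq_maxl x.+1 j).
have [s2 E2] := W_pre (leq_maxr x.+1 j).
have h1 : x < size (W x.+1) by have := size_W x.+1.
have h2 : x < size (W j) by lia.
by rewrite -(nth_pre s1 h1) -(nth_pre s2 h2) -E1 -E2.
Qed.

Lemma prefixQs j : Defs.prefix S (size (Qs j)) = Qs j.
Proof.
rewrite (@prefixS j.+1); last by rewrite WS size_cat leq_addr.
by rewrite WS take_size_cat.
Qed.

Lemma prefixW j : Defs.prefix S (size (W j)) = W j.
Proof. by rewrite (@prefixS j) // take_size. Qed.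

Lemma lev_pow i N : lev (2 ^ i * (2 * N).+1) = i.
Proof.
rewrite /lev lognM ?expn_gt0 // pfactorK // logn_coprime ?addn0 //.
by rewrite coprime2n /= mul2n odd_double.
Qed.

Import Order.TTheory GRing.Theory Num.Theory.

Lemma FS_part (a : Rdefinitions.R) : (0 < a)%R -> (a < 1)%R -> FS_depth_ge S (1 - a)%R.
Proof.
move=> a0 a1 k.
set i := maxn k (Num.Def.archi_bound (3 / a)%R).
exists (size (cdesc (Tb (Rsel i)))) => N.
set j := 2 ^ i * (2 * N).+1.
have hNj : N <= j by rewrite /j; have := expn_gt0 2 i; nia.
exists (size (Qs j)).
  have := size_W j; have := size_Qs j; lia.
rewrite prefixQs.
have Elev : lev j = i by rewrite lev_pow.
set P := W j; set m := (3 * size P).+1.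
have EQ : Qs j = P ++ flatten (nseq m (Rsel i)) by rewrite /Qs Elev.
have ub := @Dk_ub (size (cdesc (Tb (Rsel i)))) (Qs j) (enc P ++ nseq m true) (Tb (Rsel i))
   (ex_intro _ _ (conj (cdescP _) (leqnn _))) (ltac:(by rewrite EQ Tb_run)).
have lb := @Dk_lb k (Qs j) (m * (tt i).+1)
   (fun T y hT hr => @LBfst k i T y P m (leq_maxl _ _) hT (etrans hr EQ)).
apply: le_trans (leeD2r _ ub) _; rewrite -EFinD; apply: le_trans lb; rewrite lee_fin.
rewrite EQ !size_cat size_enc size_nseq size_fnseq size_Rsel /rr /tt.
have hK : (1 <= Kc i)%N by [].
have hia : (3 < a * (i%:R + 1))%R.
  have h1 := @archi_boundP _ (3 / a)%R (divr_ge0 (ler0n _ 3) (ltW a0)).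
  have h2 : ((Num.Def.archi_bound (3 / a)%R)%:R <= (i%:R : Rdefinitions.R))%R.
    by rewrite ler_nat leq_maxr.
  have h3 : (3 / a < i%:R + 1)%R.
    by apply: lt_le_trans h1 (le_trans h2 _); lra.
  by rewrite -ltr_pdivrMl // mulrC.
move: hK; rewrite -(ler_nat Rdefinitions.R) => hK.
rewrite !natrD !natrM /m -addn1 natrD natrM.
set p := ((size P)%:R : Rdefinitions.R)%R; set Kr := ((Kc i)%:R : Rdefinitions.R)%R; set Ir := (i%:R : Rdefinitions.R)%R.
have p0 : (0 <= p)%R by rewrite /p ler0n.
have I0 : (0 <= Ir)%R by rewrite /Ir ler0n.
have mK : (0 <= (3 * p + 1) * Kr)%R by apply: mulr_ge0; lra.
have h4 : (3 * ((3 * p + 1) * Kr) <= a * (Ir + 1) * ((3 * p + 1) * Kr))%R.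
  by apply: ler_wpM2r => //; lra.
have h5 : (3 * p + 1 <= (3 * p + 1) * Kr)%R.
  by rewrite -{1}(mulr1 (3 * p + 1))%R; apply: ler_wpM2l => //; lra.
rewrite !mulrSr !natrM -/Ir -/Kr.
nra.
Qed.

Import Order.TTheory GRing.Theory Num.Theory.

Section Zc.
Variable B : nat.

Definition zstep (q : 'I_B.+1) (b : bool) : 'I_B.+1 * seq bool :=
  if b then (ord0, true :: rcons (nseq q false) true)
  else if q == ord_max then (ord0, [:: false]) else (inord q.+1, [::]).

Definition Cz : pdc unit :=
  @PDC unit 'I_B.+1 ord0
    (fun q ob a => match ob, a with
                   | Some b, None => Some ((zstep q b).1, [:: None])
                   | _, _ => None end)
    (fun q ob a => match ob, a with
                   | Some b, None => (zstep q b).2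
                   | _, _ => [::] end)
    0.

Fixpoint cout (q : 'I_B.+1) (w : seq bool) : seq bool :=
  match w with [::] => [::] | b :: w' => (zstep q b).2 ++ cout (zstep q b).1 w' end.
Fixpoint cfin (q : 'I_B.+1) (w : seq bool) : 'I_B.+1 :=
  match w with [::] => q | b :: w' => cfin (zstep q b).1 w' end.

Lemma runCz (q : 'I_B.+1) w : @pdc_run_from _ Cz q [:: None] w = Some (cout q w, cfin q w).
Proof. by elim: w q => //= b w IH q; rewrite IH. Qed.

Fixpoint dec (f : nat) (s : seq bool) : seq bool :=
  match f with
  | 0 => [::]
  | f'.+1 =>
    match s with
    | [::] => [::]
    | false :: s' => nseq B.+1 false ++ dec f' s'
    | true :: s' => nseq (index true s') false ++ true :: dec f' (drop (index true s').+1 s')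
    end
  end.

Lemma nseq_cons n (s : seq bool) : nseq n false ++ false :: s = nseq n.+1 false ++ s.
Proof. by elim: n => //= n ->. Qed.

Lemma decP w : forall q f, size w <= f ->
  dec f (cout q w) ++ nseq (cfin q w) false = nseq q false ++ w.
Proof.
elim: w => [|b w IH] q f hf /=.
  by case: f hf => [|f] _ /=; rewrite cats0.
case: f hf => // f; rewrite /= ltnS => hf.
rewrite /zstep; case: b => /=.
- have hi : index true (rcons (nseq q false) true ++ cout ord0 w) = q.
    rewrite -cats1 -catA index_cat.
    have -> : (true \in nseq q false) = false by rewrite mem_nseq andbF.
    by rewrite size_nseq /= addn0.
  rewrite hi.
  have -> : drop q.+1 (rcons (nseq q false) true ++ cout ord0 w) = cout ord0 w.
    by rewrite -cats1 drop_size_cat // size_cat size_nseq addn1.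
  by rewrite /= -catA /= IH.
- case: eqP => [->|ne] /=.
  + by rewrite -catA IH // nseq_cons.
  + have hq : q < B.
      have := ltn_ord q; rewrite ltnS leq_eqVlt => /orP[/eqP e|//].
      by case: ne; apply: val_inj.
    change (dec f.+1 (cout (inord q.+1) w) ++ nseq (cfin (inord q.+1) w) false = nseq q false ++ false :: w).
    rewrite IH; last lia.
    by rewrite inordK // -nseq_cons.
Qed.

Lemma Cz_IL : ILUPDC Cz.
Proof.
split.
  split; first by move=> q a; case: a.
  split; first by move=> q a q' g; case: a.
  split; first by move=> q [b|] q' g //= [_ <-]; exists [::].
  by move=> q [|a st].
move=> w1 w2; rewrite /pdc_run !runCz => -[e1 e2].
have := @decP w1 ord0 _ (leq_addr (size w2) (size w1)).
have := @decP w2 ord0 _ (leq_addl (size w1) (size w2)).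
by rewrite e1 e2 /= => -> .
Qed.

Lemma cout_cat q u v : cout q (u ++ v) = cout q u ++ cout (cfin q u) v.
Proof. by elim: u q => //= b u IH q; rewrite IH catA. Qed.

Lemma cout_size q w : size (cout q w) <= B.+2 * size w.
Proof.
elim: w q => //= b w IH q; rewrite size_cat mulnS.
apply: leq_add (IH _).
rewrite /zstep; case: b => /=; first by rewrite size_rcons size_nseq; have := ltn_ord q; lia.
by case: eqP.
Qed.

Lemma cout_zeros z : forall q, size (cout q (nseq z false)) * B.+1 <= q + z.
Proof.
elim: z => //= z IH q; rewrite /zstep /=; case: eqP => [->|ne] /=.
  by have := IH ord0; rewrite /= add0n; lia.
have hq : q < B.
  have := ltn_ord q; rewrite ltnS leq_eqVlt => /orP[/eqP e|//].
  by case: ne; apply: val_inj.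
by have := IH (inord q.+1); rewrite inordK //; lia.
Qed.

End Zc.

Import Order.TTheory GRing.Theory Num.Theory.

Lemma PD_part (a : Rdefinitions.R) : (0 < a)%R -> ~ PD_depth_ge S a.
Proof.
move=> a0 H.
set B := Num.Def.archi_bound (2 / a)%R.
have hB : (2 < a * (B.+1)%:R)%R.
  have h1 := @archi_boundP _ (2 / a)%R (divr_ge0 (ler0n _ 2) (ltW a0)).
  have h3 : (2 / a < (B.+1)%:R)%R.
    by apply: lt_le_trans h1 _; rewrite ler_nat.
  by rewrite -ltr_pdivrMl // mulrC.
have [C' _ [N HN]] := H (Cz B) (Cz_IL B).
set j := maxn N (B.+1 * B.+2).+1.
set n := size (W j.+1).
have hn : N <= n by have := size_W j.+1; rewrite /n /j; lia.
have := HN n hn; rewrite /n prefixW /pdc_outlen /pdc_run runCz.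
set c' := (match _ with Some _ => _ | None => _ end).
rewrite WS cout_cat [size (Qs j ++ _)]size_cat [size (cout _ _ ++ _)]size_cat size_nseq.
set Q := Qs j; set z := j * (size Q).+1.
have hc1 := cout_size (pq0 (Cz B)) Q.
have hc2 := cout_zeros z (cfin (pq0 (Cz B)) Q).
have hq := ltn_ord (cfin (pq0 (Cz B)) Q).
set c1 := size (cout _ Q) in hc1 *.
set c2 := size (cout _ (nseq z false)) in hc2 *.
set fq := (cfin _ Q : nat) in hc2 hq.
have hz : ((B.+1 * B.+2).+1) * (size Q).+1 <= z.
  by rewrite /z; apply: leq_mul => //; rewrite /j leq_maxr.
have key : (c1 + c2) * B.+1 < 2 * (size Q + z).
  have e1 : c1 * B.+1 <= B.+2 * size Q * B.+1 by apply: leq_mul.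
  set sQ := size Q in hz e1 *.
  set bb := B.+1 * B.+2 in hz.
  have e3 : sQ * bb <= B.+2 * sQ * B.+1 by rewrite /bb; lia.
  nia.
move: key; rewrite -(ltr_nat Rdefinitions.R) !natrM !natrD => key.
have hc' : (0 <= (c'%:R : Rdefinitions.R))%R by rewrite ler0n.
set cc := ((c1%:R + c2%:R) : Rdefinitions.R)%R in key *.
set nn := (((size Q)%:R + z%:R) : Rdefinitions.R)%R in key *.
have hnn : (0 <= nn)%R by rewrite /nn; apply: addr_ge0; rewrite ler0n.
move=> h.
have h2 : (a * nn * (B.+1)%:R <= cc * (B.+1)%:R)%R.
  by apply: ler_wpM2r => //; lra.
have h3 : (2 * nn <= a * (B.+1)%:R * nn)%R by apply: ler_wpM2r => //; lra.
nra.
Qed.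


Theorem mainTheorem4 :
  exists S : nat -> bool,
    forall a : Rdefinitions.R, (0 < a)%R -> (a < 1)%R ->
      FS_depth_ge S (1 - a)%R /\ ~ PD_depth_ge S a.
Proof.
exists S => a a0 a1; split; [exact: FS_part | exact: PD_part].
Qed.
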